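(* If $A$ and $B$ are archimedean $*$-algebras, then so are $A\oplus B$ and $A\otimes_{\mathbb{Q}}B$, with involutions $(x,y)^*=(x^*,y^* )$ and $(x\otimes y)^*=x^*\otimes y^*$.
   Context: A $*$-algebra is a unital algebra over $\mathbb{Q}$ with a $\mathbb{Q}$-linear involution $x\mapsto x^*$ satisfying $(xy)^*=y^*x^*$; rational scalars are identified with multiples of the unit. $A_+=\{\sum_{i=1}^n x_i^*x_i: n\in\mathbb{N},x_i\in A\}$, and $x\leq y$ means $y-x\in A_+$. For $x\in A$, $\|x\|=\sqrt{\inf\{\alpha\in\mathbb{Q}_{>0}: x^*x\leq\alpha\}}\in[0,\infty]$. $A$ is archimedean if $-1\notin A_+$ and $\|x\|<\infty$ for every $x\in A$. *)

(* Defs.v *)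
From HB Require Import structures.
From mathcomp Require Import all_boot all_order all_algebra.
Set Implicit Arguments. Unset Strict Implicit. Unset Printing Implicit Defensive.
Import Order.TTheory GRing.Theory Num.Theory.
Local Open Scope ring_scope.

Definition is_star (A : algType rat) (s : A -> A) : Prop :=
  [/\ forall (k : rat) (x y : A), s (k *: x + y) = k *: s x + s y,
      forall x : A, s (s x) = x
    & forall x y : A, s (x * y) = s y * s x].

Definition pos_cone (A : algType rat) (s : A -> A) (a : A) : Prop :=
  exists l : seq A, a = \sum_(x <- l) s x * x.

Definition star_le (A : algType rat) (s : A -> A) (x y : A) : Prop :=
  pos_cone s (y - x).

(* ||x|| < oo  iff  the set {alpha in Q_{>0} : x^* x <= alpha} is nonempty
   (the infimum of the empty set being +oo). *)
Definition norm_finite (A : algType rat) (s : A -> A) (x : A) : Prop :=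
  exists alpha : rat, 0 < alpha /\ star_le s (s x * x) (alpha%:A).

Definition archimedean (A : algType rat) (s : A -> A) : Prop :=
  ~ pos_cone s (-1) /\ forall x : A, norm_finite s x.

Definition bilinear_map (A B : algType rat) (V : lmodType rat)
    (f : A -> B -> V) : Prop :=
  (forall (k : rat) (a a' : A) (b : B), f (k *: a + a') b = k *: f a b + f a' b) /\
  (forall (k : rat) (a : A) (b b' : B), f a (k *: b + b') = k *: f a b + f a b').

Definition linear_map (T : algType rat) (V : lmodType rat) (g : T -> V) : Prop :=
  forall (k : rat) (x y : T), g (k *: x + y) = k *: g x + g y.

Definition is_tensor_algebra (A B T : algType rat) (t : A -> B -> T) : Prop :=
  [/\ bilinear_map t,
      (forall (V : lmodType rat) (f : A -> B -> V), bilinear_map f ->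
         exists g : T -> V, [/\ linear_map g,
            (forall a b, g (t a b) = f a b)
          & forall g' : T -> V, linear_map g' -> (forall a b, g' (t a b) = f a b) ->
               forall z, g' z = g z]),
      (forall a a' b b', t a b * t a' b' = t (a * a') (b * b'))
    & t 1 1 = 1].

(* Main.v *)
Require Import Defs.
From HB Require Import structures.
From mathcomp Require Import all_boot all_order all_algebra.
From mathcomp Require Import boolp classical_sets reals Rstruct.
From mathcomp Require Import ring lra.
Import Order.TTheory GRing.Theory Num.Theory.
Set Implicit Arguments. Unset Strict Implicit. Unset Printing Implicit Defensive.
Local Open Scope ring_scope.


Section Star.
Variables (A : algType rat) (s : A -> A).
Hypothesis Hs : is_star s.

Lemma sDZ k x y : s (k *: x + y) = k *: s x + s y.
Proof. by case: Hs. Qed.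
Lemma sK x : s (s x) = x. Proof. by case: Hs. Qed.
Lemma sM x y : s (x * y) = s y * s x. Proof. by case: Hs. Qed.
Lemma s0 : s 0 = 0.
Proof. by have := sDZ (-1) 0 0; rewrite scaleN1r oppr0 add0r scaleN1r addNr. Qed.
Lemma sD x y : s (x + y) = s x + s y.
Proof. by rewrite -[x]scale1r sDZ !scale1r. Qed.
Lemma sZ k x : s (k *: x) = k *: s x.
Proof. by rewrite -[k *: x]addr0 sDZ s0 addr0. Qed.
Lemma sN x : s (- x) = - s x.
Proof. by rewrite -scaleN1r sZ scaleN1r. Qed.
Lemma sB x y : s (x - y) = s x - s y.
Proof. by rewrite sD sN. Qed.
Lemma s1 : s 1 = 1.
Proof. by rewrite -{1}(mulr1 (s 1)) -{2}(sK 1) -sM mulr1 sK. Qed.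
Lemma sA k : s (k%:A) = k%:A.
Proof. by rewrite sZ s1. Qed.
Lemma s_sum (I : Type) (l : seq I) (F : I -> A) :
  s (\sum_(i <- l) F i) = \sum_(i <- l) s (F i).
Proof.
elim: l => [|a l IH]; first by rewrite !big_nil s0.
by rewrite !big_cons sD IH.
Qed.

Lemma cone0 : pos_cone s 0.
Proof. by exists [::]; rewrite big_nil. Qed.
Lemma coneD x y : pos_cone s x -> pos_cone s y -> pos_cone s (x + y).
Proof. by move=> [l1 ->] [l2 ->]; exists (l1 ++ l2); rewrite big_cat. Qed.
Lemma cone_sq x : pos_cone s (s x * x).
Proof. by exists [:: x]; rewrite big_seq1. Qed.
Lemma cone_herm x : pos_cone s x -> s x = x.
Proof. by move=> [l ->]; rewrite s_sum; apply: eq_bigr => i _; rewrite sM sK. Qed.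
Lemma cone_sqscale q x : pos_cone s x -> pos_cone s ((q ^+ 2) *: x).
Proof.
move=> [l ->]; exists (map (fun y => q *: y) l); rewrite big_map scaler_sumr.
apply: eq_bigr => y _; rewrite sZ -scalerAl -scalerAr scalerA.
by rewrite expr2.
Qed.
Lemma cone_muln x n : pos_cone s x -> pos_cone s (x *+ n).
Proof.
move=> hx; elim: n => [|n IH]; first by rewrite mulr0n; exact: cone0.
by rewrite mulrS; apply: coneD.
Qed.
Lemma rat_natfrac (k : rat) : 0 <= k ->
  exists n d : nat, (0 < d)%N /\ k = n%:R / d%:R.
Proof.
move=> k0; exists (absz (numq k)), (absz (denq k)); split.
  by rewrite absz_gt0 denq_neq0.
rewrite -{1}(divq_num_den k); congr (_ / _).
  by rewrite -[in LHS](@gez0_abs (numq k)) ?numq_ge0 // -pmulrn.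
by rewrite -[in LHS](@gez0_abs (denq k)) ?ltW ?denq_gt0 // -pmulrn.
Qed.
Lemma cone_scale k x : 0 <= k -> pos_cone s x -> pos_cone s (k *: x).
Proof.
move=> k0 hx; have [n [d [d0 hk]]] := @rat_natfrac k k0.
have -> : k *: x = (((d%:R : rat)^-1) ^+ 2 *: x) *+ (n * d)%N.
  rewrite -scaler_nat scalerA natrM; congr (_ *: _); rewrite hk.
  have d0' : (d%:R : rat) != 0 by rewrite pnatr_eq0 -lt0n.
  by field.
by apply: cone_muln; apply: cone_sqscale.
Qed.
Lemma cone_const k : 0 <= k -> pos_cone s (k%:A).
Proof.
move=> k0; apply: cone_scale => //; have := cone_sq 1; by rewrite s1 mulr1.
Qed.

Lemma zaux (V : zmodType) (P M U W p q : V) : P + M = (U + W) *+ 2 ->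
  (p + q) *+ 2 - P = M + (p - U) *+ 2 + (q - W) *+ 2.
Proof.
move=> h; apply: (@addrI _ P); rewrite addrC subrK.
rewrite -(addrA M) (addrA P) h -(mulrnDl 2 (p - U) (q - W)) -mulrnDl.
congr (_ *+ 2).
by rewrite addrACA [U + _]addrC subrK [W + _]addrC subrK.
Qed.

Lemma nf0 : norm_finite s 0.
Proof.
exists 1; split => //; rewrite /star_le s0 mul0r subr0.
by apply: cone_const.
Qed.

Lemma nfD x y : norm_finite s x -> norm_finite s y -> norm_finite s (x + y).
Proof.
move=> [a [a0 ha]] [b [b0 hb]]; exists ((a + b) *+ 2); split.
  by rewrite pmulrn_lgt0 // addr_gt0.
rewrite /star_le.
have id1 : s (x + y) * (x + y) + s (x - y) * (x - y) = (s x * x + s y * y) *+ 2.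
  rewrite sD sB mulrDl mulrBl !mulrBr !mulrDr.
  set u := s x * x; set v := s y * y; set w := s x * y; set z := s y * x.
  rewrite mulr2n.
  rewrite opprB addrACA [u + w + _]addrACA subrr addr0 [z + v]addrC.
  by rewrite [v + z + _]addrACA subrr addr0 [RHS]addrACA.
have -> : ((a + b) *+ 2)%:A - s (x + y) * (x + y) =
   s (x - y) * (x - y) + (a%:A - s x * x) *+ 2 + (b%:A - s y * y) *+ 2.
  by rewrite -scalerMnl scalerDl; apply: zaux.
by apply: coneD; [apply: coneD|]; [exact: cone_sq| |]; apply: cone_muln.
Qed.
End Star.


Lemma zaux2 (V : zmodType) (a b y q : V) :
  (a + b) - y *+ 2 = (a - y - (y - q)) + (b - q).
Proof.
rewrite mulr2n opprB [RHS]addrC !addrA [_ - y + q]addrAC [b - q + a + q]addrAC subrK.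
by rewrite opprD addrA [b + a]addrC.
Qed.
Lemma zaux3 (V : zmodType) (a b y q : V) :
  (a + b) + y *+ 2 = (a + y + (y + q)) + (b - q).
Proof.
rewrite mulr2n [RHS]addrC !addrA [_ + y + q]addrAC [_ + y + q]addrAC [b - q + a + q]addrAC subrK.
by rewrite [b + a]addrC.
Qed.

Lemma herm_bound (A : algType rat) (s : A -> A) (Hs : is_star s) y :
  s y = y -> norm_finite s y ->
  exists a : rat, 0 < a /\ pos_cone s (a%:A - y) /\ pos_cone s (y + a%:A).
Proof.
move=> hy [b [b0 hb]]; rewrite /star_le hy in hb.
exists ((1 + b) / 2); split; first by rewrite divr_gt0 // addr_gt0.
have h2 : (2 : rat) != 0 by [].
split.
  have -> : ((1 + b) / 2)%:A - y =
      2^-1 *: (s (1 - y) * (1 - y) + (b%:A - y * y)).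
    rewrite (sB Hs) (s1 Hs) hy mulrBl !mulrBr !mul1r mulr1.
    rewrite -zaux2 scalerBr -scaler_nat scalerA mulVf // scale1r.
    by rewrite [(1 + b) / 2]mulrC -scalerA scalerDl scale1r.
  apply: cone_scale => //; apply: coneD => //; exact: cone_sq.
have -> : y + ((1 + b) / 2)%:A =
    2^-1 *: (s (1 + y) * (1 + y) + (b%:A - y * y)).
  rewrite (sD Hs) (s1 Hs) hy [(1 + y) * _]mulrDr mulr1 [(1 + y) * y]mulrDl mul1r.
  rewrite -zaux3 scalerDr -scaler_nat scalerA mulVf // scale1r addrC.
  by rewrite [(1 + b) / 2]mulrC -scalerA scalerDl scale1r.
apply: cone_scale => //; apply: coneD => //; exact: cone_sq.
Qed.

Local Open Scope classical_set_scope.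

Lemma zorn_ext (X Y : Type) (Good : set (X * Y) -> Prop) (D : X -> Prop) :
  (exists G, Good G) ->
  (forall F : set (set (X * Y)), F `<=` Good -> total_on F subset ->
     (exists G, F G) -> Good (\bigcup_(G in F) G)) ->
  (forall G y, Good G -> D y -> (forall r, ~ G (y, r)) ->
     exists G', [/\ Good G', G `<=` G' & exists r, G' (y, r)]) ->
  exists G, Good G /\ forall y, D y -> exists r, G (y, r).
Proof.
move=> [G0 hG0] hchain hext.
pose P := fun G : set (X * Y) => Good G \/ G = set0.
have [M [PM Mmax]] : exists M, P M /\ forall B, M `<` B -> ~ P B.
  apply: Zorn_bigcup => F FP Ftot.
  have [FG|nFG] := pselect (exists G, F G /\ Good G).
    left.
    have -> : \bigcup_(G in F) G = \bigcup_(G in (fun G => F G /\ Good G)) G.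
      apply/seteqP; split => p [G FG' Gp].
        case: (FP G FG') => [gG|G0']; first by exists G.
        by move: Gp; rewrite G0'.
      by exists G => //; case: FG'.
    apply: hchain.
    - by move=> G [].
    - by move=> G1 G2 [h1 _] [h2 _]; apply: Ftot.
    - by case: FG => G hG; exists G.
  right; apply/seteqP; split => // p [G FG Gp].
  have [gG|G0'] := FP G FG; first by exfalso; apply: nFG; exists G.
  by rewrite G0' in Gp.
have GM : Good M.
  case: PM => // M0.
  have [G0e|G0ne] := pselect (G0 = set0).
    by rewrite M0 -G0e.
  exfalso; apply: (Mmax G0); last by left.
  rewrite M0; split => //; apply: contra_not G0ne => h.
  apply/seteqP; split => // p Gp; exact: (h p Gp).
exists M; split => // y Dy.
apply: contrapT => nex.
have nr : forall r, ~ M (y, r) by move=> r Mr; apply: nex; exists r.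
have [G' [gG' MG' [r G'r]]] := hext M y GM Dy nr.
apply: (Mmax G'); last by left.
split => // h; apply: (nr r); exact: h _ G'r.
Qed.

Local Open Scope classical_set_scope.

Section State.
Variables (R : realType) (A : algType rat) (s : A -> A).
Hypothesis Hs : is_star s.
Hypothesis Har : archimedean s.

Definition good (G : set (A * R)) : Prop :=
  [/\ G (1, 1),
      forall k x r y u, G (x, r) -> G (y, u) -> G (k *: x + y, ratr k * r + u),
      forall x r, G (x, r) -> pos_cone s x -> 0 <= r
    & forall x r, G (x, r) -> s x = x].

Lemma good0 G : good G -> G (0, 0).
Proof.
case=> h1 hl _ _; have := hl (-1) _ _ _ _ h1 h1.
by rewrite scaleN1r addNr rmorphN rmorph1 mulN1r addNr.
Qed.

Lemma goodZ G k x r : good G -> G (x, r) -> G (k *: x, ratr k * r).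
Proof.
move=> gG hx; have [_ hl _ _] := gG; have := hl k _ _ _ _ hx (good0 gG).
by rewrite !addr0.
Qed.

Lemma goodC G k : good G -> G (k%:A, ratr k).
Proof. move=> gG; have := goodZ k gG (let: And4 h _ _ _ := gG in h); by rewrite mulr1. Qed.

Lemma good_uniq G x r r' : good G -> G (x, r) -> G (x, r') -> r = r'.
Proof.
move=> gG h h'; have [_ hl hp _] := gG.
have h1 := hl (-1) _ _ _ _ h h'; have h2 := hl (-1) _ _ _ _ h' h.
rewrite scaleN1r addNr rmorphN rmorph1 mulN1r in h1 h2.
have := hp _ _ h1 (cone0 s); have := hp _ _ h2 (cone0 s).
lra.
Qed.

Lemma good_init : good (fun p => exists k : rat, p = (k%:A, ratr k)).
Proof.
split.
- by exists 1; rewrite scale1r rmorph1.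
- move=> k x r y u [k1 [-> ->]] [k2 [-> ->]]; exists (k * k1 + k2).
  by rewrite scalerA scalerDl rmorphD rmorphM.
- move=> x r [k [-> ->]] hc; rewrite ler0q; apply: contraPT hc.
  move=> /negP k0 hc; have {}k0 : k < 0 by rewrite ltNge; apply/negP.
  case: Har => H _; apply: H.
  have := cone_scale Hs (k := - k^-1) _ hc; rewrite scalerA mulNr mulVf ?lt_eqF //.
  by rewrite scaleN1r; apply; rewrite oppr_ge0 invr_le0 ltW.
- by move=> x r [k [-> _]]; rewrite (sA Hs).
Qed.

Lemma good_chain (F : set (set (A * R))) : F `<=` good -> total_on F subset ->
  (exists G, F G) -> good (\bigcup_(G in F) G).
Proof.
move=> FG Ftot [G0 FG0]; split.
- by exists G0 => //; case: (FG _ FG0).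
- move=> k x r y u [G1 F1 h1] [G2 F2 h2].
  have [s12|s21] := Ftot _ _ F1 F2.
    by exists G2 => //; have [_ hl _ _] := FG _ F2; apply: hl => //; exact: s12.
  by exists G1 => //; have [_ hl _ _] := FG _ F1; apply: hl => //; exact: s21.
- by move=> x r [G FG' h]; have [_ _ hp _] := FG _ FG'; exact: hp.
- by move=> x r [G FG' h]; have [_ _ _ hh] := FG _ FG'; exact: (hh _ _ h).
Qed.

Lemma good_ext G y : good G -> s y = y -> (forall r, ~ G (y, r)) ->
  exists G', [/\ good G', G `<=` G' & exists r, G' (y, r)].
Proof.
move=> gG hy ny.
have [_ hl hp hh] := gG.
have [a [a0 [hay hya]]] := herm_bound Hs hy (let: conj _ h := Har in h y).
pose L := [set v : R | exists x, G (x, v) /\ pos_cone s (y - x)].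
have ubL : forall w v, G (w, v) -> pos_cone s (w - y) -> ubound L v.
  move=> w v hw hwy r [x [hx hyx]].
  have := hl (-1) _ _ _ _ hx hw; rewrite scaleN1r rmorphN rmorph1 mulN1r => h.
  have : pos_cone s (- x + w).
    have -> : - x + w = (w - y) + (y - x) by rewrite addrC addrA subrK.
    exact: coneD.
  by move=> /(hp _ _ h); rewrite addrC subr_ge0.
have L0 : L !=set0.
  exists (ratr (- a)), ((- a)%:A); split; first exact: goodC.
  by rewrite scaleNr opprK.
have hubL : has_ubound L by exists (ratr a); apply: (ubL (a%:A)) => //; exact: goodC.
pose c := sup L.
pose G' := fun p : A * R => exists x r k, G (x, r) /\ p = (x + k *: y, r + ratr k * c).
have GG' : G `<=` G'.
  by move=> [x r] h; exists x, r, 0; rewrite scale0r rmorph0 mul0r !addr0.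
exists G'; split => //; last first.
  exists c, 0, 0, 1; split; first exact: good0.
  by rewrite scale1r rmorph1 mul1r !add0r.
split.
- exists 1, 1, 0; split; first by case: gG.
  by rewrite scale0r rmorph0 mul0r !addr0.
- move=> k p r' q u [x1 [r1 [k1 [h1 [-> ->]]]]] [x2 [r2 [k2 [h2 [-> ->]]]]].
  exists (k *: x1 + x2), (ratr k * r1 + r2), (k * k1 + k2); split; first exact: hl.
  congr (_, _).
    by rewrite scalerDr scalerDl -scalerA addrACA.
  by rewrite rmorphD rmorphM; ring.
- move=> p v [x [r [k [hx [-> ->]]]]] hc.
  have [k0|kn0] := eqVneq k 0.
    by move: hc; rewrite k0 scale0r addr0 rmorph0 mul0r addr0; apply: hp.
  have [kp|kp|k0'] := ltgtP k 0; last by move: kn0; rewrite k0' eqxx.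
  +
    have hc' := cone_scale Hs (k := (- k)^-1) _ hc.
    have hw : pos_cone s ((- k)^-1 *: x - y).
      have hpos : 0 <= (- k)^-1 by rewrite invr_ge0 oppr_ge0 ltW.
      move: (hc' hpos).
      have e : (- k)^-1 * k = -1 by rewrite invrN mulNr mulVf ?lt_eqF.
      by rewrite scalerDr scalerA e scaleN1r.
    have hG := goodZ ((- k)^-1) gG hx.
    have cle : c <= ratr ((- k)^-1) * r.
      by apply: ge_sup => //; exact: ubL hG hw.
    move: cle; rewrite fmorphV rmorphN /=.
    have kr : ratr k < 0 :> R by rewrite ltrq0.
    move=> cle.
    have : ratr k * ((- ratr k)^-1 * r) <= ratr k * c by rewrite ler_nM2l.
    have -> : ratr k * ((- ratr k)^-1 * r) = - r :> R.
      by rewrite mulrA invrN mulrN mulfV ?lt_eqF // mulN1r.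
    lra.
  +
    have hc' := cone_scale Hs (k := k^-1) _ hc.
    have hw : pos_cone s (y - (- k^-1 *: x)).
      have hpos : 0 <= k^-1 by rewrite invr_ge0 ltW.
      move: (hc' hpos).
      by rewrite scalerDr scalerA mulVf ?gt_eqF // scale1r scaleNr opprK addrC.
    have hG := goodZ (- k^-1) gG hx.
    have lec : ratr (- k^-1) * r <= c.
      by apply: ub_le_sup => //; exists (- k^-1 *: x).
    move: lec; rewrite rmorphN fmorphV /=.
    have kr : 0 < ratr k :> R by rewrite ltr0q.
    move=> lec.
    have : ratr k * (- (ratr k)^-1 * r) <= ratr k * c by rewrite ler_pM2l.
    have -> : ratr k * (- (ratr k)^-1 * r) = - r :> R.
      by rewrite mulrA mulrN mulfV ?gt_eqF // mulN1r.
    lra.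
- by move=> p v [x [r [k [hx [-> _]]]]]; rewrite (sD Hs) (sZ Hs) hy (hh _ _ hx).
Qed.

Lemma state_exists : exists phi : A -> R,
  [/\ forall k x y, phi (k *: x + y) = ratr k * phi x + phi y,
      phi 1 = 1,
      forall x, phi (s x) = phi x
    & forall x, pos_cone s x -> 0 <= phi x].
Proof.
have [M [gM hM]] := @zorn_ext A R good (fun y => s y = y)
  (ex_intro _ _ good_init) good_chain (fun G y g hy ny => good_ext g hy ny).
pose h x := 2^-1 *: (x + s x).
have hh x : s (h x) = h x by rewrite (sZ Hs) (sD Hs) (sK Hs) addrC.
pose phi x := xget 0 [set r | M (h x, r)].
have Mphi x : M (h x, phi x) by apply: (@xgetPex _ 0 [set r | M (h x, r)]); apply: hM; exact: hh.
have [h1 hl hp _] := gM.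
exists phi; split.
- move=> k x y; apply: (good_uniq gM (Mphi _)).
  have -> : h (k *: x + y) = k *: h x + h y.
    rewrite /h (sD Hs) (sZ Hs) scalerA mulrC -scalerA -scalerDr; congr (_ *: _); by rewrite scalerDr addrACA.
  exact: hl.
- apply: (good_uniq gM (Mphi _)).
  have -> : h 1 = 1 by rewrite /h (s1 Hs) -mulr2n -scaler_nat scalerA mulVf // scale1r.
  exact: h1.
- by move=> x; congr (xget _ _); rewrite /h (sK Hs) addrC.
- move=> x hx; apply: (hp _ _ (Mphi x)).
  have -> : h x = x by rewrite /h (cone_herm Hs hx) -mulr2n -scaler_nat scalerA mulVf // scale1r.
  exact: hx.
Qed.

End State.


Section Mat.
Variable R : realType.
Implicit Types (p q : nat -> nat -> R) (c : nat -> R) (a : nat -> R).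

Definition Qf n p c := \sum_(i < n) \sum_(j < n) c i * c j * p i j.
Definition Wf n p q := \sum_(i < n) \sum_(j < n) p i j * q i j.
Definition Lf n a c := \sum_(j < n) c j * a j.
Definition psdQ n p := forall c : nat -> rat, 0 <= Qf n p (fun i => ratr (c i)).
Definition psdR n p := forall c, 0 <= Qf n p c.
Definition symm p := forall i j, p i j = p j i.
Definition shift p := fun i j => p i.+1 j.+1.
Definition shv c := fun i => c i.+1.
Definition row0 p := fun j => p 0%N j.+1.
Definition schur q := fun i j => q i.+1 j.+1 - q 0%N i.+1 * q 0%N j.+1 / q 0%N 0%N.
Definition vcons (t : R) c := fun i => if i is i'.+1 then c i' else t.
Definition rcons_ (t : rat) (c : nat -> rat) := fun i => if i is i'.+1 then c i' else t.

Lemma decompQ n p c : symm p ->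
  Qf n.+1 p c = c 0%N ^+ 2 * p 0%N 0%N + 2 * c 0%N * Lf n (row0 p) (shv c)
                + Qf n (shift p) (shv c).
Proof.
move=> sp; rewrite /Qf; under eq_bigr => i _ do rewrite big_ord_recl /=.
rewrite big_ord_recl /=.
rewrite big_split /= -!addrA expr2; congr (_ + _).
rewrite addrA; congr (_ + _).
rewrite /Lf mulr_sumr -big_split /=; apply: eq_bigr => i _.
rewrite /shv /row0 /bump /= add1n (sp i.+1); ring.
Qed.

Lemma decompW n p q : symm p -> symm q ->
  Wf n.+1 p q = p 0%N 0%N * q 0%N 0%N + 2 * Lf n (row0 q) (row0 p)
                + Wf n (shift p) (shift q).
Proof.
move=> sp sq; rewrite /Wf; under eq_bigr => i _ do rewrite big_ord_recl /=.
rewrite big_ord_recl /=.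
rewrite big_split /= -!addrA; congr (_ + _).
rewrite addrA; congr (_ + _).
rewrite /Lf mulr_sumr -big_split /=; apply: eq_bigr => i _.
rewrite /row0 /bump /= sp [q _ 0%N]sq; ring.
Qed.

Lemma Lf0 n a : Lf n a (fun _ => 0) = 0.
Proof. by rewrite /Lf big1 // => i _; rewrite mul0r. Qed.
Lemma Qf0 n p : Qf n p (fun _ => 0) = 0.
Proof. by rewrite /Qf big1 // => i _; rewrite big1 // => j _; rewrite !mul0r. Qed.

Lemma lin0 n a : (forall c : nat -> rat, Lf n a (fun i => ratr (c i)) = 0) ->
  forall c, Lf n a c = 0.
Proof.
elim: n a => [|n IH] a h c; first by rewrite /Lf big_ord0.
have e : forall c, Lf n.+1 a c = c 0%N * a 0%N + Lf n (fun j => a j.+1) (shv c).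
  by move=> c'; rewrite /Lf big_ord_recl.
have a0 : a 0%N = 0.
  have := h (rcons_ 1 (fun _ => 0)); rewrite e /shv /=.
  by rewrite (_ : (fun i => ratr 0) = fun _ => 0) ?Lf0 ?rmorph1 ?mul1r ?addr0 // ;
    apply: funext => i; rewrite rmorph0.
rewrite e a0 mulr0 add0r; apply: IH => c'.
by have := h (rcons_ 0 c'); rewrite e rmorph0 mul0r add0r.
Qed.

Lemma rat_lin0 (m K : R) : (forall t : rat, 0 <= 2 * ratr t * m + K) -> m = 0.
Proof.
move=> h; apply: contraPeq h => m0; apply/existsNP.
have kb : K <= `|K| by exact: ler_norm.
pose x := - (`|K| + 1) / (2 * m).
have hx : 2 * m * x = - (`|K| + 1) by rewrite /x; field; exact: m0.
suff [t ht] : exists t : rat, 2 * m * ratr t < - (`|K| + 1).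
  by exists t; apply/negP; rewrite -ltNge; lra.
move: m0; rewrite neq_lt => /orP[mneg|mpos].
- have [t] := rat_in_itvoo (ltr_pwDr ltr01 (lexx x)).
  rewrite in_itv /= => /andP[xt _]; exists t.
  by rewrite -hx ltr_nM2l // pmulr_rlt0.
- have [t] := rat_in_itvoo (ltr_nwDr (@ltrN10 R) (lexx x)).
  rewrite in_itv /= => /andP[_ tx]; exists t.
  by rewrite -hx ltr_pM2l // pmulr_rgt0.
Qed.

Lemma sq_approx (a x eps : R) : 0 < a -> 0 < eps ->
  exists t : rat, a * (ratr t - x) ^+ 2 < eps.
Proof.
move=> a0 e0; pose d := eps / (a + eps).
have d0 : 0 < d by rewrite divr_gt0 // addr_gt0.
have ad : d * (a + eps) = eps by rewrite /d divfK // gt_eqF // addr_gt0.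
have [t] := rat_in_itvoo (ltr_pwDr d0 (lexx x)).
rewrite in_itv /= => /andP[xt tx]; exists t.
have d1 : d < 1.
  have : d * (a + eps) < 1 * (a + eps) by rewrite mul1r ad ltrDr.
  by rewrite ltr_pM2r // addr_gt0.
set y := ratr t - x.
have y0 : 0 < y by rewrite subr_gt0.
have yd : y < d by rewrite /y; lra.
have : a * y < a * d by rewrite ltr_pM2l.
have : y * y < y by rewrite gtr_pMr //; lra.
rewrite expr2; nra.
Qed.

Lemma schurQ n q c : q 0%N 0%N != 0 ->
  Qf n (schur q) c = Qf n (shift q) c - (Lf n (row0 q) c) ^+ 2 / q 0%N 0%N.
Proof.
move=> q0; rewrite expr2 /Lf mulr_suml mulr_suml /Qf -sumrB; apply: eq_bigr => i _.
rewrite big_distrr /= big_distrl /= -sumrB; apply: eq_bigr => j _.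
rewrite /schur /shift /row0; field; exact: q0.
Qed.

Lemma complete_sq (a m Q c0 : R) : a != 0 ->
  c0 ^+ 2 * a + 2 * c0 * m + Q = a * (c0 + m / a) ^+ 2 + (Q - m ^+ 2 / a).
Proof. by move=> a0; field. Qed.

Lemma schur_psdQ n q : symm q -> psdQ n.+1 q -> 0 < q 0%N 0%N -> psdQ n (schur q).
Proof.
move=> sq hq q0 c; rewrite leNgt; apply/negP => hneg.
have q0' : q 0%N 0%N != 0 by rewrite gt_eqF.
set m := Lf n (row0 q) (fun i => ratr (c i)).
set Q' := Qf n (shift q) (fun i => ratr (c i)).
have e : Qf n (schur q) (fun i => ratr (c i)) = Q' - m ^+ 2 / q 0%N 0%N by rewrite schurQ.
have epos : 0 < - (Q' - m ^+ 2 / q 0%N 0%N) by rewrite oppr_gt0 -e.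
have [t ht] := @sq_approx (q 0%N 0%N) (- (m / q 0%N 0%N)) (- (Q' - m ^+ 2 / q 0%N 0%N)) q0 epos.
have := hq (rcons_ t c); rewrite decompQ //.
have -> : shv (fun i => ratr (rcons_ t c i)) = (fun i => ratr (c i)) :> (nat -> R) by [].
rewrite -/m -/Q' /= complete_sq //.
move: ht; rewrite opprK; lra.
Qed.
Lemma symm_shift p : symm p -> symm (shift p).
Proof. by move=> sp i j; rewrite /shift sp. Qed.
Lemma symm_schur p : symm p -> symm (schur p).
Proof. by move=> sp i j; rewrite /schur (sp i.+1) [p 0%N i.+1 * _]mulrC. Qed.

Lemma psd_shift n p : symm p -> psdQ n.+1 p -> psdQ n (shift p).
Proof.
move=> sp hp c; have := hp (rcons_ 0 c); rewrite decompQ //= rmorph0.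
by rewrite expr2 !(mul0r, mulr0) !add0r.
Qed.
Lemma psdR_shift n p : symm p -> psdR n.+1 p -> psdR n (shift p).
Proof.
move=> sp hp c; have := hp (vcons 0 c); rewrite decompQ //=.
by rewrite expr2 !(mul0r, mulr0) !add0r.
Qed.
Lemma p00_ge0 n p : symm p -> psdQ n.+1 p -> 0 <= p 0%N 0%N.
Proof.
move=> sp hp; have := hp (rcons_ 1 (fun _ => 0)); rewrite decompQ //= rmorph1.
have -> : shv (fun i => ratr (rcons_ 1 (fun=> 0) i)) = (fun _ => 0) :> (nat -> R).
  by apply: funext => i; rewrite /shv /= rmorph0.
by rewrite Lf0 Qf0 expr1n mul1r mulr0 !addr0.
Qed.
Lemma row_zero n p : symm p -> psdQ n.+1 p -> p 0%N 0%N = 0 ->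
  forall c, Lf n (row0 p) c = 0.
Proof.
move=> sp hp p0; apply: lin0 => c.
apply: (@rat_lin0 _ (Qf n (shift p) (fun i => ratr (c i)))) => t.
by have := hp (rcons_ t c); rewrite decompQ // p0 mulr0 add0r.
Qed.

Lemma psdQ_psdR n p : symm p -> psdQ n p -> psdR n p.
Proof.
elim: n p => [|n IH] p sp hp c; first by rewrite /Qf big_ord0.
have p0 := p00_ge0 sp hp.
have [e|ne] := eqVneq (p 0%N 0%N) 0.
  rewrite decompQ // e mulr0 add0r (row_zero sp hp e) mulr0 add0r.
  exact: IH (symm_shift sp) (psd_shift sp hp) _.
have pp : 0 < p 0%N 0%N by rewrite lt_neqAle eq_sym ne.
rewrite decompQ // complete_sq // -schurQ //; apply: addr_ge0.
  by apply: mulr_ge0 => //; exact: sqr_ge0.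
exact: IH (symm_schur sp) (schur_psdQ sp hp pp) _.
Qed.

Lemma schur_prod n p q : symm p -> symm q -> psdR n p -> psdQ n q -> 0 <= Wf n p q.
Proof.
elim: n p q => [|n IH] p q sp sq hp hq; first by rewrite /Wf big_ord0.
have q0 := p00_ge0 sq hq.
have [e|ne] := eqVneq (q 0%N 0%N) 0.
  rewrite decompW // e mulr0 add0r (row_zero sq hq e) mulr0 add0r.
  exact: IH (symm_shift sp) (symm_shift sq) (psdR_shift sp hp) (psd_shift sq hq).
have qp : 0 < q 0%N 0%N by rewrite lt_neqAle eq_sym ne.
pose u := vcons 1 (fun j => q 0%N j.+1 / q 0%N 0%N).
have hu := hp u; rewrite decompQ //= in hu.
have e1 : Lf n (row0 p) (shv u) * q 0%N 0%N = Lf n (row0 q) (row0 p).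
  rewrite /Lf mulr_suml; apply: eq_bigr => j _; rewrite /shv /u /row0 /=.
  field; exact: ne.
have e2 : Wf n (shift p) (schur q) + q 0%N 0%N * Qf n (shift p) (shv u)
          = Wf n (shift p) (shift q).
  rewrite /Wf /Qf mulr_sumr -big_split; apply: eq_bigr => i _ /=.
  rewrite mulr_sumr -big_split; apply: eq_bigr => j _ /=.
  rewrite /shv /u /schur /shift /=; field; exact: ne.
have hW := IH _ _ (symm_shift sp) (symm_schur sq) (psdR_shift sp hp) (schur_psdQ sq hq qp).
rewrite decompW // -e1 -e2.
have : 0 <= q 0%N 0%N * (1 ^+ 2 * p 0%N 0%N + 2 * 1 * Lf n (row0 p) (shv u) +
   Qf n (shift p) (shv u)) by apply: mulr_ge0 => //; exact: ltW.
nra.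
Qed.
End Mat.

Local Open Scope classical_set_scope.

Definition RQ (R : realType) : Type := R.
HB.instance Definition _ (R : realType) := GRing.Zmodule.on (RQ R).
Section RQdef.
Variable R : realType.
Definition rqscale (k : rat) (x : RQ R) : RQ R := (ratr k : R) * (x : R).
Lemma rq1 : forall a b v, rqscale a (rqscale b v) = rqscale (a * b) v.
Proof. by move=> a b v; rewrite /rqscale rmorphM mulrA. Qed.
Lemma rq2 : left_id 1 rqscale. Proof. by move=> v; rewrite /rqscale rmorph1 mul1r. Qed.
Lemma rq3 : right_distributive rqscale +%R. Proof. by move=> a u v; rewrite /rqscale mulrDr. Qed.
Lemma rq4 : forall v, {morph rqscale^~ v : a b / a + b}.
Proof. by move=> v a b; rewrite /rqscale rmorphD mulrDl. Qed.
End RQdef.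
HB.instance Definition _ (R : realType) :=
  GRing.Zmodule_isLmodule.Build rat (RQ R) (@rq1 R) (@rq2 R) (@rq3 R) (@rq4 R).

Lemma rqZ (R : realType) k (x : RQ R) : k *: x = (ratr k : R) * (x : R).
Proof. by []. Qed.

Section Tens.
Variables (A B T : algType rat) (t : A -> B -> T).
Hypothesis Ht : is_tensor_algebra t.

Lemma tl k a a' b : t (k *: a + a') b = k *: t a b + t a' b.
Proof. by case: Ht => [[h _]] _ _ _; apply: h. Qed.
Lemma tr k a b b' : t a (k *: b + b') = k *: t a b + t a b'.
Proof. by case: Ht => [[_ h]] _ _ _; apply: h. Qed.
Lemma tmul a a' b b' : t a b * t a' b' = t (a * a') (b * b').
Proof. by case: Ht. Qed.
Lemma t11 : t 1 1 = 1. Proof. by case: Ht. Qed.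
Lemma t0l b : t 0 b = 0.
Proof. by have := tl (-1) 0 0 b; rewrite scaleN1r oppr0 add0r scaleN1r addNr. Qed.
Lemma t0r a : t a 0 = 0.
Proof. by have := tr (-1) a 0 0; rewrite scaleN1r oppr0 add0r scaleN1r addNr. Qed.
Lemma tZl k a b : t (k *: a) b = k *: t a b.
Proof. by rewrite -[k *: a]addr0 tl t0l addr0. Qed.
Lemma tZr k a b : t a (k *: b) = k *: t a b.
Proof. by rewrite -[k *: b]addr0 tr t0r addr0. Qed.
Lemma tDl a a' b : t (a + a') b = t a b + t a' b.
Proof. by have := tl 1 a a' b; rewrite !scale1r. Qed.
Lemma tDr a b b' : t a (b + b') = t a b + t a b'.
Proof. by have := tr 1 a b b'; rewrite !scale1r. Qed.
Lemma tsuml (I : Type) (l : seq I) F b : t (\sum_(i <- l) F i) b = \sum_(i <- l) t (F i) b.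
Proof.
elim: l => [|x l IH]; first by rewrite !big_nil t0l.
by rewrite !big_cons tDl IH.
Qed.
Lemma tsumr (I : Type) (l : seq I) a F : t a (\sum_(i <- l) F i) = \sum_(i <- l) t a (F i).
Proof.
elim: l => [|x l IH]; first by rewrite !big_nil t0r.
by rewrite !big_cons tDr IH.
Qed.

Definition spanT (z : T) := exists l : seq (A * B), z = \sum_(p <- l) t p.1 p.2.

Lemma span0 : spanT 0. Proof. by exists [::]; rewrite big_nil. Qed.
Lemma spanD x y : spanT x -> spanT y -> spanT (x + y).
Proof. by move=> [l1 ->] [l2 ->]; exists (l1 ++ l2); rewrite big_cat. Qed.
Lemma spanZ k x : spanT x -> spanT (k *: x).
Proof.
move=> [l ->]; exists (map (fun p => (k *: p.1, p.2)) l).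
by rewrite big_map scaler_sumr; apply: eq_bigr => p _; rewrite tZl.
Qed.
Lemma spant a b : spanT (t a b).
Proof. by exists [:: (a, b)]; rewrite big_seq1. Qed.

Section Sep.
Variable R : realType.

Definition sgood (z : T) (G : set (T * R)) : Prop :=
  [/\ forall k x r y u, G (x, r) -> G (y, u) -> G (k *: x + y, ratr k * r + u),
      forall x r r', G (x, r) -> G (x, r') -> r = r',
      forall w, spanT w -> G (w, 0)
    & G (z, 1)].

Lemma zaux4 (V : zmodType) (x p x' q : V) : x + p = x' + q -> p - q = - x + x'.
Proof. by move=> e; apply: (@addrI _ x); rewrite addrA addNKr e addrK. Qed.

Lemma sgood00 z G : sgood z G -> G (0, 0).
Proof.
case=> hl _ _ hz; have := hl (-1) _ _ _ _ hz hz.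
by rewrite scaleN1r addNr rmorphN rmorph1 mulN1r addNr.
Qed.

Lemma sgood_dom z G x r x' r' y k k' : sgood z G -> (forall r, ~ G (y, r)) ->
  G (x, r) -> G (x', r') -> x + k *: y = x' + k' *: y -> k = k'.
Proof.
move=> gG ny hx hx' e; have [hl _ _ _] := gG.
apply: contraPeq ny => kk; apply/existsNP.
have h1 := hl (-1) _ _ _ _ hx hx'.
have h2 := hl ((k - k')^-1) _ _ _ _ h1 (sgood00 gG).
exists (ratr (k - k')^-1 * (ratr (-1) * r + r') + 0) => nG; apply: nG.
suff -> : y = (k - k')^-1 *: (-1 *: x + x') + 0 by [].
have e' : (k - k') *: y = -1 *: x + x'.
  by rewrite scaleN1r scalerBl; apply: zaux4.
rewrite addr0 -e' scalerA mulVf ?scale1r //; by rewrite subr_eq0.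
Qed.

Lemma span_all z : spanT z.
Proof.
apply: contrapT => nz.
pose G0 := fun p : T * R => exists w k, spanT w /\ p = (w + k *: z, ratr k).
have gG0 : sgood z G0.
  split.
  - move=> k x r y u [w1 [k1 [s1 [-> ->]]]] [w2 [k2 [s2 [-> ->]]]].
    exists (k *: w1 + w2), (k * k1 + k2); split; first by apply: spanD => //; apply: spanZ.
    congr (_, _); last by rewrite rmorphD rmorphM.
    by rewrite scalerDr scalerDl scalerA addrACA.
  - move=> x r r' [w1 [k1 [s1 [-> ->]]]] [w2 [k2 [s2 []]]] e ->.
    case: (eqVneq k1 k2) => [->//|kk]; exfalso; apply: (nz).
    have -> : z = (k1 - k2)^-1 *: (w2 - w1).
      have e' : (k1 - k2) *: z = w2 - w1.
        by rewrite scalerBl (zaux4 e) addrC.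
      by rewrite -e' scalerA mulVf ?scale1r // subr_eq0.
    by apply: spanZ; apply: spanD => //; rewrite -scaleN1r; apply: spanZ.
  - by move=> w sw; exists w, 0; rewrite scale0r addr0 rmorph0.
  - by exists 0, 1; rewrite add0r scale1r rmorph1; split => //; exact: span0.
have hchain : forall F : set (set (T * R)), F `<=` sgood z -> total_on F subset ->
    (exists G, F G) -> sgood z (\bigcup_(G in F) G).
  move=> F FG Ftot [G0' FG0]; split.
  - move=> k x r y u [G1 F1 h1] [G2 F2 h2].
    have [s12|s21] := Ftot _ _ F1 F2.
      by exists G2 => //; have [hl _ _ _] := FG _ F2; apply: hl => //; exact: s12.
    by exists G1 => //; have [hl _ _ _] := FG _ F1; apply: hl => //; exact: s21.
  - move=> x r r' [G1 F1 h1] [G2 F2 h2].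
    have [s12|s21] := Ftot _ _ F1 F2.
      by have [_ hf _ _] := FG _ F2; apply: (hf x) => //; exact: s12.
    by have [_ hf _ _] := FG _ F1; apply: (hf x) => //; exact: s21.
  - by move=> w sw; exists G0' => //; have [_ _ hs _] := FG _ FG0; exact: hs.
  - by exists G0' => //; have [_ _ _ hz] := FG _ FG0.
have hext : forall G y, sgood z G -> True -> (forall r, ~ G (y, r)) ->
    exists G', [/\ sgood z G', G `<=` G' & exists r, G' (y, r)].
  move=> G y gG _ ny; have [hl hf hs hz] := gG.
  pose G' := fun p : T * R => exists x r k, G (x, r) /\ p = (x + k *: y, r).
  exists G'; split.
  - split.
    + move=> k p r' q u [x1 [r1 [k1 [h1 [-> ->]]]]] [x2 [r2 [k2 [h2 [-> ->]]]]].
      exists (k *: x1 + x2), (ratr k * r1 + r2), (k * k1 + k2); split; first exact: hl.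
      by congr (_, _); rewrite scalerDr scalerDl scalerA addrACA.
    + move=> p r1 r2 [x1 [r1' [k1 [h1 [-> ->]]]]] [x2 [r2' [k2 [h2 []]]]] e ->.
      have kk := sgood_dom gG ny h1 h2 e.
      rewrite kk in e; move/addIr: e => e; rewrite e in h1.
      exact: hf h1 h2.
    + by move=> w sw; exists w, 0, 0; rewrite scale0r addr0; split => //; exact: hs.
    + by exists z, 1, 0; rewrite scale0r addr0.
  - by move=> [x r] h; exists x, r, 0; rewrite scale0r addr0.
  - by exists 0, 0, 0, 1; rewrite add0r scale1r; split => //; exact: sgood00 gG.
have [M [gM hM]] := @zorn_ext T R (sgood z) (fun _ => True) (ex_intro _ _ gG0) hchain hext.
have [hl hf hs hz] := gM.
pose l x : RQ R := xget (0 : R) [set r | M (x, r)].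
have Ml x : M (x, l x) by apply: (@xgetPex _ 0 [set r | M (x, r)]); apply: hM.
case: Ht => _ hu _ _.
have bz : bilinear_map (fun (_ : A) (_ : B) => (0 : RQ R)).
  by split => *; rewrite scaler0 addr0.
have [g [lg hg hun]] := hu _ _ bz.
have ll : linear_map (l : T -> RQ R).
  move=> k x y; apply: (hf (k *: x + y)); first exact: Ml.
  by rewrite rqZ; apply: hl; exact: Ml.
have l0 : forall a b, l (t a b) = 0.
  by move=> a b; apply: (hf _ _ _ (Ml _)); apply: hs; exact: spant.
have lin0 : linear_map (fun _ : T => (0 : RQ R)) by move=> k x y; rewrite scaler0 addr0.
have e1 := hun l ll l0 z.
have e2 := hun (fun _ => 0) lin0 (fun _ _ => erefl) z.
have lz : l z = 1 by apply: (hf z); [exact: Ml | exact: hz].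
by move: e1; rewrite -e2 lz => /eqP; rewrite oner_eq0.
Qed.
End Sep.
End Tens.


Section Prod.
Variables (A B : algType rat) (sA : A -> A) (sB : B -> B).
Hypotheses (HsA : is_star sA) (HsB : is_star sB).
Hypotheses (HarA : archimedean sA) (HarB : archimedean sB).

Lemma pair_sum (I : Type) (l : seq I) (F : I -> (A * B)%type) :
  \sum_(i <- l) F i = (\sum_(i <- l) (F i).1, \sum_(i <- l) (F i).2).
Proof.
elim: l => [|x l IH]; first by rewrite !big_nil.
by rewrite !big_cons IH.
Qed.

Lemma prod_arch : archimedean (fun p : (A * B)%type => (sA p.1, sB p.2)).
Proof.
split.
  move=> [l hl]; case: HarA => hA _; apply: hA.
  exists (map fst l); rewrite big_map.
  by move: hl; rewrite pair_sum => -[-> _].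
move=> [x y].
have [a [a0 ha]] := (let: conj _ h := HarA in h x).
have [b [b0 hb]] := (let: conj _ h := HarB in h y).
exists (a + b); split; first by rewrite addr_gt0.
have [la hla] : pos_cone sA ((a + b)%:A - sA x * x).
  rewrite scalerDl addrAC; apply: coneD => //; apply: cone_const => //; exact: ltW.
have [lb hlb] : pos_cone sB ((a + b)%:A - sB y * y).
  rewrite scalerDl -addrA; apply: coneD => //; apply: cone_const => //; exact: ltW.
exists (map (fun u => (u, 0)) la ++ map (fun v => (0, v)) lb).
rewrite pair_sum big_cat big_cat !big_map /=.
have z1 : \sum_(j <- lb) sA 0 * 0 = 0 by rewrite big1 // => j _; rewrite mulr0.
have z2 : \sum_(j <- la) sB 0 * 0 = 0 by rewrite big1 // => j _; rewrite mulr0.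
rewrite z1 z2.
rewrite addr0 add0r -hla -hlb.
by [].
Qed.
End Prod.

Section TensArch.
Variables (R : realType) (A B T : algType rat) (sA : A -> A) (sB : B -> B).
Variables (t : A -> B -> T) (sT : T -> T).
Hypotheses (HsA : is_star sA) (HsB : is_star sB) (HsT : is_star sT).
Hypotheses (HarA : archimedean sA) (HarB : archimedean sB).
Hypothesis Ht : is_tensor_algebra t.
Hypothesis HsTt : forall a b, sT (t a b) = t (sA a) (sB b).

Lemma fsum (X : lmodType rat) (f : X -> R) (I : Type) (l : seq I) (F : I -> X) :
  (forall k x y, f (k *: x + y) = ratr k * f x + f y) ->
  f (\sum_(i <- l) F i) = \sum_(i <- l) f (F i).
Proof.
move=> hf; have f0 : f 0 = 0.
  by have := hf (-1) 0 0; rewrite scaleN1r oppr0 add0r rmorphN rmorph1 mulN1r addNr.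
elim: l => [|x l IH]; first by rewrite !big_nil.
by rewrite !big_cons -[F x]scale1r hf rmorph1 mul1r scale1r IH.
Qed.

Lemma fZ (X : lmodType rat) (f : X -> R) k x :
  (forall k x y, f (k *: x + y) = ratr k * f x + f y) -> f (k *: x) = ratr k * f x.
Proof.
move=> hf; have f0 : f 0 = 0.
  by have := hf (-1) 0 0; rewrite scaleN1r oppr0 add0r rmorphN rmorph1 mulN1r addNr.
by rewrite -[k *: x]addr0 hf f0 addr0.
Qed.

Lemma sum_nth (X : Type) (d : X) (l : seq X) (F : X -> R) :
  \sum_(p <- l) F p = \sum_(i < size l) F (nth d l i).
Proof. by rewrite (big_nth d) big_mkord. Qed.

Lemma gram_psd (C : algType rat) (sC : C -> C) (HsC : is_star sC) (phi : C -> R)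
  (phl : forall k x y, phi (k *: x + y) = ratr k * phi x + phi y)
  (phs : forall x, phi (sC x) = phi x)
  (php : forall x, pos_cone sC x -> 0 <= phi x) (a : nat -> C) n :
  symm (fun i j => phi (sC (a i) * a j)) /\ psdQ n (fun i j => phi (sC (a i) * a j)).
Proof.
split.
  by move=> i j; rewrite -phs (sM HsC) (sK HsC).
move=> c.
pose x := \sum_(i < n) c i *: a i.
suff -> : Qf n (fun i j => phi (sC (a i) * a j)) (fun i => ratr (c i)) = phi (sC x * x).
  by apply: php; exact: cone_sq.
rewrite /x (s_sum HsC) mulr_suml (fsum _ _ phl) /Qf.
apply: eq_bigr => i _; rewrite mulr_sumr (fsum _ _ phl); apply: eq_bigr => j _.
rewrite (sZ HsC) -scalerAl -scalerAr scalerA (fZ _ _ phl) rmorphM.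
by rewrite mulrA.
Qed.

Lemma nf_pure a b : norm_finite sT (t a b).
Proof.
have [al [a0 [la hla]]] := (let: conj _ h := HarA in h a).
have [be [b0 [lb hlb]]] := (let: conj _ h := HarB in h b).
exists (al * be); split; first exact: mulr_gt0.
rewrite /star_le HsTt (tmul Ht).
have e : (al * be)%:A - t (sA a * a) (sB b * b) =
    t (al%:A - sA a * a) (sB b * b) + al *: t 1 (be%:A - sB b * b).
  rewrite -(tZl Ht) -(t11 Ht) -[in LHS]scalerA -(tZr Ht) -(tZl Ht).
  rewrite (tDl Ht) (tDr Ht) -!scaleN1r !(tZl Ht, tZr Ht) !scaleN1r.
  by rewrite [RHS]addrC addrA scalerN subrK.
rewrite e; apply: coneD.
  rewrite hla (tsuml Ht); exists (map (fun x => t x b) la); rewrite big_map.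
  by apply: eq_bigr => x _; rewrite HsTt (tmul Ht).
apply: (cone_scale HsT); first exact: ltW.
rewrite hlb (tsumr Ht); exists (map (fun y => t 1 y) lb); rewrite big_map.
by apply: eq_bigr => y _; rewrite HsTt (tmul Ht) (s1 HsA) mul1r.
Qed.

Lemma tens_arch : archimedean sT.
Proof.
have [phi [phl ph1 phs php]] := @state_exists R A sA HsA HarA.
have [psi [psl ps1 pss psp]] := @state_exists R B sB HsB HarB.
pose f := fun a b => (phi a * psi b : RQ R).
have bf : bilinear_map f.
  split.
    by move=> k a a' b; rewrite /f phl rqZ mulrDl mulrA.
  by move=> k a b b'; rewrite /f psl rqZ mulrDr mulrCA.
case: (Ht) => _ hu _ _.
have [Phi [lP hP _]] := hu _ _ bf.
have Pl : forall k x y, (Phi (k *: x + y) : R) = ratr k * Phi x + Phi y.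
  by move=> k x y; rewrite lP.
have Ppos : forall z, 0 <= (Phi (sT z * z) : R).
  move=> z; have [l ->] := span_all Ht R z.
  rewrite (s_sum HsT) mulr_suml (fsum _ _ Pl).
  under eq_bigr => p _ do rewrite mulr_sumr (fsum _ _ Pl).
  under eq_bigr => p _ do under eq_bigr => q _ do rewrite HsTt (tmul Ht) hP.
  rewrite (sum_nth (0, 0)); under eq_bigr => i _ do rewrite (sum_nth (0, 0)).
  have [sP pP] := gram_psd HsA phl phs php (fun i => (nth (0, 0) l i).1) (size l).
  have [sQ pQ] := gram_psd HsB psl pss psp (fun i => (nth (0, 0) l i).2) (size l).
  exact: (schur_prod sP sQ (psdQ_psdR sP pP) pQ).
split.
  move=> [l hl].
  have : 0 <= (Phi (-1) : R) by rewrite hl (fsum _ _ Pl); apply: sumr_ge0 => z _.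
  rewrite -scaleN1r (fZ _ _ Pl) -(t11 Ht) hP /f ph1 ps1 rmorphN rmorph1.
  lra.
move=> z; have [l ->] := span_all Ht R z.
elim: l => [|p l IH]; first by rewrite big_nil; exact: nf0.
by rewrite big_cons; apply: (nfD HsT) => //; exact: nf_pure.
Qed.
End TensArch.


Unset Implicit Arguments.
Local Close Scope classical_set_scope.

Theorem lemma2p6 (A B : algType rat) (sA : A -> A) (sB : B -> B) :
  is_star sA -> is_star sB -> archimedean sA -> archimedean sB ->
  (archimedean (fun p : (A * B)%type => (sA p.1, sB p.2)))
  /\ (forall (T : algType rat) (t : A -> B -> T) (sT : T -> T),
        is_tensor_algebra t -> is_star sT ->
        (forall a b, sT (t a b) = t (sA a) (sB b)) ->
        archimedean sT).
Proof.
move=> HsA HsB HarA HarB; split; first exact: prod_arch.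
move=> T t sT Ht HsT HsTt.
exact: (@tens_arch Rdefinitions.R A B T sA sB t sT HsA HsB HsT HarA HarB Ht HsTt).
Qed.
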